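(* Let $\Gamma$ be a finite multiset of formulas and $A$ a formula of propositional logic. If the sequent $\Gamma \Rightarrow A$ is derivable in classical propositional logic (i.e. $\Gamma \vdash_c A$), then $\Pi_V, \Gamma \vdash_i A$ (i.e. $A$ is derivable in intuitionistic propositional logic from the assumptions $\Pi_V \cup \Gamma$), where \[ V = (\mathcal{V}^-(\Gamma) \cup \mathcal{V}^+(A)) \cap (\mathcal{V}^+_{ns}(\Gamma) \cup \mathcal{V}^-(A)). \]
   Context: Formulas are built from propositional variables and $\bot$ using $\land$, $\lor$, $\to$; $\lnot A$ abbreviates $A \to \bot$. For a set $V$ of propositional variables, $\Pi_V = \{ p \lor \lnot p \mid p \in V\}$. $\vdash_c$ and $\vdash_i$ denote derivability in classical and intuitionistic propositional logic respectively (e.g. in the cut-free sequent calculi G3cp and G3ip). The sets $\mathcal{V}^+(A)$, $\mathcal{V}^-(A)$ of variables occurring positively, negatively in $A$ are defined simultaneously by: $\mathcal{V}^+(p)=\{p\}$, $\mathcal{V}^+(\bot)=\emptyset$, $\mathcal{V}^+(A\land B)=\mathcal{V}^+(A\lor B)=\mathcal{V}^+(A)\cup\mathcal{V}^+(B)$, $\mathcal{V}^+(A\to B)=\mathcal{V}^-(A)\cup\mathcal{V}^+(B)$; $\mathcal{V}^-(p)=\mathcal{V}^-(\bot)=\emptyset$, $\mathcal{V}^-(A\land B)=\mathcal{V}^-(A\lor B)=\mathcal{V}^-(A)\cup\mathcal{V}^-(B)$, $\mathcal{V}^-(A\to B)=\mathcal{V}^+(A)\cup\mathcal{V}^-(B)$.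 The set $\mathcal{V}^+_{ns}(A)$ of variables occurring non-strictly positively is defined by $\mathcal{V}^+_{ns}(p)=\mathcal{V}^+_{ns}(\bot)=\emptyset$, $\mathcal{V}^+_{ns}(A\land B)=\mathcal{V}^+_{ns}(A\lor B)=\mathcal{V}^+_{ns}(A)\cup\mathcal{V}^+_{ns}(B)$, $\mathcal{V}^+_{ns}(A\to B)=\mathcal{V}^-(A)\cup\mathcal{V}^+_{ns}(B)$. For a finite multiset $\Gamma$, $\mathcal{V}^+(\Gamma)=\bigcup_{A\in\Gamma}\mathcal{V}^+(A)$, and similarly for $\mathcal{V}^-$ and $\mathcal{V}^+_{ns}$. *)

(* Defs.v *)
From Stdlib Require Import List Permutation.
Import ListNotations.

Inductive form : Type :=
| Var : nat -> form
| Bot : form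
| And : form -> form -> form
| Or  : form -> form -> form
| Imp : form -> form -> form.

Definition Neg (A : form) : form := Imp A Bot.

Fixpoint vp (b : bool) (A : form) : list nat :=
  match A with
  | Var p => if b then [p] else []
  | Bot => []
  | And B C => vp b B ++ vp b C
  | Or B C => vp b B ++ vp b C
  | Imp B C => vp (negb b) B ++ vp b C
  end.

Definition Vpos (A : form) : list nat := vp true A.
Definition Vneg (A : form) : list nat := vp false A.

Fixpoint Vns (A : form) : list nat :=
  match A with
  | Var _ => []
  | Bot => []
  | And B C => Vns B ++ Vns C
  | Or B C => Vns B ++ Vns C
  | Imp B C => Vneg B ++ Vns C
  end.

Definition VposL (G : list form) : list nat := flat_map Vpos G.
Definition VnegL (G : list form) : list nat := flat_map Vneg G.
Definition VnsL  (G : list form) : list nat := flat_map Vns G.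

(* G3cp: sequents Gamma => Delta with multisets represented as lists
   up to permutation (exchange rule). *)
Inductive G3cp : list form -> list form -> Prop :=
| G3c_ax : forall p G D, G3cp (Var p :: G) (Var p :: D)
| G3c_botL : forall G D, G3cp (Bot :: G) D
| G3c_andL : forall A B G D, G3cp (A :: B :: G) D -> G3cp (And A B :: G) D
| G3c_andR : forall A B G D, G3cp G (A :: D) -> G3cp G (B :: D) ->
    G3cp G (And A B :: D)
| G3c_orL : forall A B G D, G3cp (A :: G) D -> G3cp (B :: G) D ->
    G3cp (Or A B :: G) D
| G3c_orR : forall A B G D, G3cp G (A :: B :: D) -> G3cp G (Or A B :: D)
| G3c_impL : forall A B G D, G3cp G (A :: D) -> G3cp (B :: G) D ->
    G3cp (Imp A B :: G) D
| G3c_impR : forall A B G D, G3cp (A :: G) (B :: D) -> G3cp G (Imp A B :: D)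
| G3c_perm : forall G G' D D', G3cp G D -> Permutation G G' -> Permutation D D' ->
    G3cp G' D'.

Definition cderiv (G : list form) (A : form) : Prop := G3cp G [A].

Inductive NJ (H : form -> Prop) : form -> Prop :=
| NJ_ass : forall A, H A -> NJ H A
| NJ_botE : forall A, NJ H Bot -> NJ H A
| NJ_andI : forall A B, NJ H A -> NJ H B -> NJ H (And A B)
| NJ_andE1 : forall A B, NJ H (And A B) -> NJ H A
| NJ_andE2 : forall A B, NJ H (And A B) -> NJ H B
| NJ_orI1 : forall A B, NJ H A -> NJ H (Or A B)
| NJ_orI2 : forall A B, NJ H B -> NJ H (Or A B)
| NJ_orE : forall A B C, NJ H (Or A B) ->
    NJ (fun X => X = A \/ H X) C -> NJ (fun X => X = B \/ H X) C -> NJ H C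
| NJ_impI : forall A B, NJ (fun X => X = A \/ H X) B -> NJ H (Imp A B)
| NJ_impE : forall A B, NJ H (Imp A B) -> NJ H A -> NJ H B.

Definition PiV (V : nat -> Prop) (X : form) : Prop :=
  exists p, V p /\ X = Or (Var p) (Neg (Var p)).

Definition ideriv (V : nat -> Prop) (G : list form) (A : form) : Prop :=
  NJ (fun X => PiV V X \/ In X G) A.

(* Main.v *)
Require Import Defs.
From Stdlib Require Import List Permutation Classical Arith Lia Bool.
Import ListNotations.

Lemma NJ_weak : forall H A, NJ H A -> forall H', (forall X, H X -> H' X) -> NJ H' A.
Proof.
  intros H A D. induction D; intros H' HH.
  - apply NJ_ass; auto.
  - apply NJ_botE; auto.
  - apply NJ_andI; auto.
  - eapply NJ_andE1; eauto.
  - eapply NJ_andE2; eauto.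
  - apply NJ_orI1; auto.
  - apply NJ_orI2; auto.
  - eapply NJ_orE; [apply IHD1; exact HH| apply IHD2 | apply IHD3];
    intros X [->|HX]; auto.
  - apply NJ_impI; apply IHD; intros X [->|HX]; auto.
  - eapply NJ_impE; eauto.
Qed.

Lemma NJ_trans : forall H A, NJ H A -> forall H', (forall X, H X -> NJ H' X) -> NJ H' A.
Proof.
  intros H A D. induction D; intros H' HH.
  - apply HH; auto.
  - apply NJ_botE; auto.
  - apply NJ_andI; auto.
  - eapply NJ_andE1; eauto.
  - eapply NJ_andE2; eauto.
  - apply NJ_orI1; auto.
  - apply NJ_orI2; auto.
  - eapply NJ_orE; [apply IHD1; exact HH| apply IHD2 | apply IHD3];
    intros X [->|HX]; try (apply NJ_ass; now left);
    apply (NJ_weak _ _ (HH X HX)); intros; now right.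
  - apply NJ_impI; apply IHD; intros X [->|HX]; [apply NJ_ass; now left|].
    apply (NJ_weak _ _ (HH X HX)); intros; now right.
  - eapply NJ_impE; eauto.
Qed.

Lemma NJ_cut : forall H A B, NJ H A -> NJ (fun X => X = A \/ H X) B -> NJ H B.
Proof.
  intros. eapply NJ_trans; [exact H1|]. intros X [->|HX]; auto. apply NJ_ass; auto.
Qed.

Definition Top := Imp Bot Bot.
Lemma NJ_Top : forall H, NJ H Top.
Proof. intros. apply NJ_impI, NJ_ass. now left. Qed.

Fixpoint eval (v : nat -> bool) (F : form) : bool :=
  match F with
  | Var p => v p
  | Bot => false
  | And B C => eval v B && eval v C
  | Or B C => eval v B || eval v C
  | Imp B C => negb (eval v B) || eval v C
  end.

Lemma sound : forall G D, G3cp G D -> forall v, (forall X, In X G -> eval v X = true) ->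
  exists X, In X D /\ eval v X = true.
Proof.
  intros G D Hd. induction Hd; intros v Hv.
  - exists (Var p); split; [now left|]. apply Hv; now left.
  - specialize (Hv Bot (or_introl eq_refl)). discriminate.
  - apply IHHd. intros X [<-|[<-|HX]]; try (apply Hv; now right).
    all: specialize (Hv _ (or_introl eq_refl)); simpl in Hv; apply andb_true_iff in Hv; tauto.
  - destruct (IHHd1 v Hv) as [X [[<-|HX] E]]; [|exists X; split; [right|]; auto].
    destruct (IHHd2 v Hv) as [Y [[<-|HY] E']]; [|exists Y; split; [right|]; auto].
    exists (And A B); split; [now left|]. simpl; rewrite E, E'; auto.
  - pose proof (Hv _ (or_introl eq_refl)) as E; simpl in E. apply orb_true_iff in E as [E|E].
    + apply IHHd1. intros X [<-|HX]; auto. apply Hv; now right.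
    + apply IHHd2. intros X [<-|HX]; auto. apply Hv; now right.
  - destruct (IHHd v Hv) as [X [[<-|[<-|HX]] E]].
    + exists (Or A B); split; [now left|]. simpl; rewrite E; auto.
    + exists (Or A B); split; [now left|]. simpl; rewrite E, orb_true_r; auto.
    + exists X; split; [right|]; auto.
  - pose proof (Hv _ (or_introl eq_refl)) as E; simpl in E.
    destruct (IHHd1 v (fun X HX => Hv X (or_intror HX))) as [X [[<-|HX] E1]].
    + rewrite E1 in E; simpl in E. apply IHHd2. intros X [<-|HX]; auto. apply Hv; now right.
    + exists X; auto.
  - destruct (eval v A) eqn:EA.
    + destruct (IHHd v) as [X [[<-|HX] E]].
      * intros X [<-|HX]; auto.
      * exists (Imp A B); split; [now left|]. simpl; rewrite E, orb_true_r; auto.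
      * exists X; split; [right|]; auto.
    + exists (Imp A B); split; [now left|]. simpl; rewrite EA; auto.
  - rename H into P1, H0 into P2. destruct (IHHd v) as [X [HX E]].
    + intros X HX. apply Hv. exact (Permutation_in _ P1 HX).
    + exists X; split; auto. exact (Permutation_in _ P2 HX).
Qed.

Definition valid G A := forall v, (forall X, In X G -> eval v X = true) -> eval v A = true.

Lemma cderiv_valid : forall G A, cderiv G A -> valid G A.
Proof.
  intros G A H v Hv. destruct (sound _ _ H v Hv) as [X [[<-|[]] E]]; auto.
Qed.
Fixpoint subst (p : nat) (c : form) (F : form) : form :=
  match F with
  | Var q => if Nat.eqb q p then c else Var q
  | Bot => Bot
  | And B C => And (subst p c B) (subst p c C)
  | Or B C => Or (subst p c B) (subst p c C)
  | Imp B C => Imp (subst p c B) (subst p c C)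
  end.

Lemma vp_subst : forall p c, (forall b, vp b c = []) -> forall F b q,
  In q (vp b (subst p c F)) -> In q (vp b F) /\ q <> p.
Proof.
  intros p c Hc F. induction F; intros b q Hq; simpl in *.
  - destruct (Nat.eqb n p) eqn:E.
    + rewrite Hc in Hq; destruct Hq.
    + simpl in Hq. destruct b; [|destruct Hq]. destruct Hq as [<-|[]].
      apply Nat.eqb_neq in E. split; [now left|auto].
  - destruct Hq.
  - apply in_app_iff in Hq as [Hq|Hq]; [apply IHF1 in Hq|apply IHF2 in Hq];
      rewrite in_app_iff; tauto.
  - apply in_app_iff in Hq as [Hq|Hq]; [apply IHF1 in Hq|apply IHF2 in Hq];
      rewrite in_app_iff; tauto.
  - apply in_app_iff in Hq as [Hq|Hq]; [apply IHF1 in Hq|apply IHF2 in Hq];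
      rewrite in_app_iff; tauto.
Qed.

Lemma Vns_subst : forall p c, (forall b, vp b c = []) -> Vns c = [] -> forall F q,
  In q (Vns (subst p c F)) -> In q (Vns F) /\ q <> p.
Proof.
  intros p c Hc Hc' F. induction F; intros q Hq; simpl in *.
  - destruct (Nat.eqb n p) eqn:E.
    + rewrite Hc' in Hq; destruct Hq.
    + destruct Hq.
  - destruct Hq.
  - apply in_app_iff in Hq as [Hq|Hq]; [apply IHF1 in Hq|apply IHF2 in Hq];
      rewrite in_app_iff; tauto.
  - apply in_app_iff in Hq as [Hq|Hq]; [apply IHF1 in Hq|apply IHF2 in Hq];
      rewrite in_app_iff; tauto.
  - apply in_app_iff in Hq as [Hq|Hq]; [apply (vp_subst p c Hc) in Hq|apply IHF2 in Hq];
      rewrite in_app_iff; unfold Vneg; tauto.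
Qed.

Lemma Top_vp : forall b, vp b Top = []. Proof. destruct b; reflexivity. Qed.
Lemma Bot_vp : forall b, vp b Bot = []. Proof. destruct b; reflexivity. Qed.

Lemma eval_subst : forall v p c F,
  eval v (subst p c F) = eval (fun q => if Nat.eqb q p then eval v c else v q) F.
Proof.
  intros v p c F; induction F; simpl; auto; try now rewrite IHF1, IHF2.
  destruct (Nat.eqb n p); reflexivity.
Qed.

Lemma valid_subst : forall p c G A, valid G A -> valid (map (subst p c) G) (subst p c A).
Proof.
  intros p c G A H v Hv. rewrite eval_subst. apply H.
  intros X HX. rewrite <- eval_subst. apply Hv. apply in_map; auto.
Qed.

Lemma NJ_subst_gen : forall p c H, (NJ H (Var p) -> NJ H c) -> (NJ H c -> NJ H (Var p)) ->
  (forall H', (forall X, H X -> H' X) -> (NJ H' (Var p) -> NJ H' c) /\ (NJ H' c -> NJ H' (Var p))) ->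
  forall F, (NJ H F -> NJ H (subst p c F)) /\ (NJ H (subst p c F) -> NJ H F).
Abort.

Lemma NJ_up : forall H B A, NJ H A -> NJ (fun X => X = B \/ H X) A.
Proof. intros. eapply NJ_weak; eauto. Qed.
Lemma NJ_hd : forall H B, NJ (fun X => X = B \/ H X) B.
Proof. intros. apply NJ_ass. now left. Qed.

Lemma NJ_subst_equiv : forall p c (Q : (form -> Prop) -> Prop),
  (forall H H', Q H -> (forall X, H X -> H' X) -> Q H') ->
  (forall H, Q H -> NJ H (Var p) -> NJ H c) ->
  (forall H, Q H -> NJ H c -> NJ H (Var p)) ->
  forall F H, Q H -> (NJ H F -> NJ H (subst p c F)) /\ (NJ H (subst p c F) -> NJ H F).
Proof.
  intros p c Q Qup Q1 Q2 F. induction F; intros H HQ; simpl.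
  - destruct (Nat.eqb n p) eqn:E; [apply Nat.eqb_eq in E; subst|]; split; auto.
  - split; auto.
  - split; intro D.
    + apply NJ_andI; apply IHF1 || apply IHF2; auto;
      [eapply NJ_andE1|eapply NJ_andE2]; eauto.
    + apply NJ_andI; [apply (proj2 (IHF1 H HQ))|apply (proj2 (IHF2 H HQ))];
      [eapply NJ_andE1|eapply NJ_andE2]; eauto.
  - assert (Q1' : forall B, Q (fun X => X = B \/ H X)) by (intros; eapply Qup; eauto).
    split; intro D; (eapply NJ_orE; [exact D| |]).
    + apply NJ_orI1. apply IHF1; auto. apply NJ_hd.
    + apply NJ_orI2. apply IHF2; auto. apply NJ_hd.
    + apply NJ_orI1. apply IHF1; auto. apply NJ_hd.
    + apply NJ_orI2. apply IHF2; auto. apply NJ_hd.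
  - assert (Q1' : forall B, Q (fun X => X = B \/ H X)) by (intros; eapply Qup; eauto).
    split; intro D; apply NJ_impI.
    + apply IHF2; auto. eapply NJ_impE; [apply NJ_up; exact D|]. apply IHF1; auto. apply NJ_hd.
    + apply IHF2; auto. eapply NJ_impE; [apply NJ_up; exact D|]. apply IHF1; auto. apply NJ_hd.
Qed.

Lemma NJ_subst_Top : forall p F H, H (Var p) ->
  (NJ H F -> NJ H (subst p Top F)) /\ (NJ H (subst p Top F) -> NJ H F).
Proof.
  intros p F H Hp. apply (NJ_subst_equiv p Top (fun H => H (Var p))); auto.
  - intros; apply NJ_Top.
  - intros. apply NJ_ass; auto.
Qed.

Lemma NJ_subst_Bot : forall p F H, H (Neg (Var p)) ->
  (NJ H F -> NJ H (subst p Bot F)) /\ (NJ H (subst p Bot F) -> NJ H F).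
Proof.
  intros p F H Hp. apply (NJ_subst_equiv p Bot (fun H => H (Neg (Var p)))); auto.
  - intros. eapply NJ_impE; [apply NJ_ass; exact H1|exact H2].
  - intros. apply NJ_botE; auto.
Qed.

Lemma NJ_mono : forall p F H,
  (~ In p (vp false F) -> NJ H F -> NJ H (subst p Top F)) /\
  (~ In p (vp true F) -> NJ H (subst p Top F) -> NJ H F).
Proof.
  intros p F. induction F; intros H; simpl.
  - destruct (Nat.eqb n p) eqn:E; [apply Nat.eqb_eq in E; subst|].
    + split; intros; [apply NJ_Top| exfalso; apply H0; now left].
    + split; auto.
  - split; auto.
  - split; intros Hn D; rewrite in_app_iff in Hn.
    + apply NJ_andI; [apply (proj1 (IHF1 H))|apply (proj1 (IHF2 H))]; try tauto;
      [eapply NJ_andE1|eapply NJ_andE2]; eauto.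
    + apply NJ_andI; [apply (proj2 (IHF1 H))|apply (proj2 (IHF2 H))]; try tauto;
      [eapply NJ_andE1|eapply NJ_andE2]; eauto.
  - split; intros Hn D; rewrite in_app_iff in Hn; (eapply NJ_orE; [exact D| |]).
    + apply NJ_orI1. apply IHF1; [tauto|]. apply NJ_hd.
    + apply NJ_orI2. apply IHF2; [tauto|]. apply NJ_hd.
    + apply NJ_orI1. apply IHF1; [tauto|]. apply NJ_hd.
    + apply NJ_orI2. apply IHF2; [tauto|]. apply NJ_hd.
  - split; intros Hn D; rewrite in_app_iff in Hn; apply NJ_impI.
    + apply IHF2; [tauto|]. eapply NJ_impE; [apply NJ_up; exact D|].
      apply IHF1; [tauto|]. apply NJ_hd.
    + apply IHF2; [tauto|]. eapply NJ_impE; [apply NJ_up; exact D|].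
      apply IHF1; [tauto|]. apply NJ_hd.
Qed.

Lemma eval_mono : forall F (v w : nat -> bool), (forall q, v q = true -> w q = true) ->
  ((forall q, ~ In q (vp false F)) -> eval v F = true -> eval w F = true) /\
  ((forall q, ~ In q (vp true F)) -> eval w F = true -> eval v F = true).
Proof.
  intros F v w Hvw. induction F; simpl.
  - split; intros Hn E; auto. exfalso; apply (Hn n); now left.
  - split; auto.
  - split; intros Hn E; apply andb_true_iff in E as [E1 E2]; apply andb_true_iff; split;
    first [apply IHF1 | apply IHF2]; auto; intros q Hq; apply (Hn q); apply in_app_iff; auto.
  - split; intros Hn E; apply orb_true_iff in E as [E|E]; apply orb_true_iff;
    [left; apply IHF1|right; apply IHF2|left; apply IHF1|right; apply IHF2]; auto;
    intros q Hq; apply (Hn q); apply in_app_iff; auto.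
  - split; intros Hn E; apply orb_true_iff in E as [E|E]; apply orb_true_iff.
    + left. destruct (eval w F1) eqn:E1; auto. simpl.
      rewrite (proj2 IHF1) in E; auto. intros q Hq; apply (Hn q); apply in_app_iff; auto.
    + right. apply IHF2; auto. intros q Hq; apply (Hn q); apply in_app_iff; auto.
    + left. destruct (eval v F1) eqn:E1; auto. simpl.
      rewrite (proj1 IHF1) in E; auto. intros q Hq; apply (Hn q); apply in_app_iff; auto.
    + right. apply IHF2; auto. intros q Hq; apply (Hn q); apply in_app_iff; auto.
Qed.

Definition form_eq_dec : forall x y : form, {x = y} + {x <> y}.
Proof. decide equality; apply Nat.eq_dec. Defined.

Fixpoint size (F : form) : nat :=
  match F with
  | Var _ | Bot => 1
  | And B C | Or B C | Imp B C => 1 + size B + size C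
  end.
Fixpoint ssz (G : list form) : nat :=
  match G with [] => 0 | X :: G => size X + ssz G end.

Lemma size_pos : forall F, 1 <= size F. Proof. destruct F; simpl; lia. Qed.

Notation rem X G := (remove form_eq_dec X G).

Lemma ssz_rem : forall X G, In X G -> ssz (rem X G) + size X <= ssz G.
Proof.
  intros X G. induction G as [|Y G IH]; intros H; [destruct H|]. simpl.
  destruct (form_eq_dec X Y) as [->|Hn].
  - destruct (in_dec form_eq_dec Y G).
    + specialize (IH i). lia.
    + rewrite notin_remove; auto. lia.
  - simpl. destruct H as [->|H]; [congruence|]. specialize (IH H). lia.
Qed.

Lemma In_rem : forall Y X G, In Y G -> Y = X \/ In Y (rem X G).
Proof.
  intros. destruct (form_eq_dec Y X); auto. right; apply in_in_remove; auto.
Qed.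
Lemma rem_In : forall Y X G, In Y (rem X G) -> In Y G.
Proof. intros. apply in_remove in H; tauto. Qed.

Lemma VnsL_In : forall q X G, In X G -> In q (Vns X) -> In q (VnsL G).
Proof. intros. unfold VnsL. apply in_flat_map. eauto. Qed.

Lemma Vns_Vpos : forall F q, In q (Vns F) -> In q (vp true F).
Proof.
  induction F; intros q H; simpl in *; auto; rewrite in_app_iff in *; intuition.
Qed.

Definition red G X := (exists B C, X = And B C) \/ (exists B C, X = Or B C) \/ X = Bot \/
  (exists B C, X = Imp B C /\ valid (rem X G) B).

Lemma valid_rem : forall v X G, (forall Y, In Y (rem X G) -> eval v Y = true) -> eval v X = true ->
  forall Y, In Y G -> eval v Y = true.
Proof. intros. destruct (In_rem Y X G H1) as [->|H2]; auto. Qed.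

Lemma Core2 : forall n G A, ssz G + size A <= n -> valid G A ->
  (forall q, ~ In q (VnsL G)) -> (forall q, ~ In q (vp false A)) -> NJ (fun X => In X G) A.
Proof.
  induction n as [|n IH]; intros G A Hs Hv HG HA.
  { pose proof (size_pos A); lia. }
  assert (Hgen : ~ (exists B C, A = And B C) -> ~ (exists B C, A = Imp B C) ->
     NJ (fun X => In X G) A).
  { intros NA NI.
    destruct (classic (exists X, In X G /\ red G X)) as [[X [HX HR]]|NR].
    - pose proof (ssz_rem X G HX) as Hr.
      destruct HR as [[B [C ->]]|[[B [C ->]]|[->|[B [C [-> HB]]]]]].
      + assert (D : NJ (fun X => In X (B :: C :: rem (And B C) G)) A).
        { apply IH; simpl in *; try lia; try exact HA.
          - intros v Hv'. apply Hv. apply (valid_rem v (And B C)).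
            + intros; apply Hv'; simpl; auto.
            + simpl. rewrite (Hv' B), (Hv' C); simpl; auto.
          - intros q Hq. simpl in Hq. rewrite !in_app_iff in Hq.
            destruct Hq as [Hq|[Hq|Hq]].
            + apply (HG q). apply (VnsL_In q _ _ HX). simpl; rewrite in_app_iff; auto.
            + apply (HG q). apply (VnsL_In q _ _ HX). simpl; rewrite in_app_iff; auto.
            + apply in_flat_map in Hq as [Y [HY1 HY2]]. apply (HG q).
              apply (VnsL_In q Y); auto. eapply rem_In; eauto. }
        eapply NJ_trans; [exact D|]. intros Y [<-|[<-|HY]].
        * eapply NJ_andE1; apply NJ_ass; exact HX.
        * eapply NJ_andE2; apply NJ_ass; exact HX.
        * apply NJ_ass. eapply rem_In; eauto.
      + eapply NJ_orE; [apply NJ_ass; exact HX| |].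
        * assert (D : NJ (fun X => In X (B :: rem (Or B C) G)) A).
          { apply IH; simpl in *; try lia; try exact HA.
            - intros v Hv'. apply Hv. apply (valid_rem v (Or B C)).
              + intros; apply Hv'; simpl; auto.
              + simpl. rewrite (Hv' B); simpl; auto.
            - intros q Hq. simpl in Hq. rewrite !in_app_iff in Hq.
              destruct Hq as [Hq|Hq].
              + apply (HG q). apply (VnsL_In q _ _ HX). simpl; rewrite in_app_iff; auto.
              + apply in_flat_map in Hq as [Y [HY1 HY2]]. apply (HG q).
                apply (VnsL_In q Y); auto. eapply rem_In; eauto. }
          eapply NJ_trans; [exact D|]. intros Y [<-|HY]; apply NJ_ass; [now left|].
          right; eapply rem_In; eauto.
        * assert (D : NJ (fun X => In X (C :: rem (Or B C) G)) A).
          { apply IH; simpl in *; try lia; try exact HA.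
            - intros v Hv'. apply Hv. apply (valid_rem v (Or B C)).
              + intros; apply Hv'; simpl; auto.
              + simpl. rewrite (Hv' C); simpl; auto. apply orb_true_r.
            - intros q Hq. simpl in Hq. rewrite !in_app_iff in Hq.
              destruct Hq as [Hq|Hq].
              + apply (HG q). apply (VnsL_In q _ _ HX). simpl; rewrite in_app_iff; auto.
              + apply in_flat_map in Hq as [Y [HY1 HY2]]. apply (HG q).
                apply (VnsL_In q Y); auto. eapply rem_In; eauto. }
          eapply NJ_trans; [exact D|]. intros Y [<-|HY]; apply NJ_ass; [now left|].
          right; eapply rem_In; eauto.
      + apply NJ_botE, NJ_ass; exact HX.
      + assert (DB : NJ (fun X => In X (rem (Imp B C) G)) B).
        { apply IH; simpl in *; try lia; auto.
          - intros q Hq. apply in_flat_map in Hq as [Y [HY1 HY2]]. apply (HG q).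
            apply (VnsL_In q Y); auto. eapply rem_In; eauto.
          - intros q Hq. apply (HG q). apply (VnsL_In q _ _ HX). simpl; rewrite in_app_iff; auto. }
        assert (DA : NJ (fun X => In X (C :: rem (Imp B C) G)) A).
        { apply IH; simpl in *; try lia; try exact HA.
          - intros v Hv'. apply Hv. apply (valid_rem v (Imp B C)).
            + intros; apply Hv'; simpl; auto.
            + simpl. rewrite (Hv' C); simpl; auto. apply orb_true_r.
          - intros q Hq. simpl in Hq. rewrite !in_app_iff in Hq.
            destruct Hq as [Hq|Hq].
            + apply (HG q). apply (VnsL_In q _ _ HX). simpl; rewrite in_app_iff; auto.
            + apply in_flat_map in Hq as [Y [HY1 HY2]]. apply (HG q).
              apply (VnsL_In q Y); auto. eapply rem_In; eauto. }
        eapply NJ_trans; [exact DA|]. intros Y [<-|HY].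
        * eapply NJ_impE; [apply NJ_ass; exact HX|].
          eapply NJ_trans; [exact DB|]. intros Z HZ; apply NJ_ass; exact (rem_In _ _ _ HZ).
        * apply NJ_ass. eapply rem_In; eauto.
    -
      set (vS := fun q => if in_dec form_eq_dec (Var q) G then true else false).
      assert (HvS : forall q, vS q = true -> In (Var q) G).
      { intros q; unfold vS; destruct (in_dec form_eq_dec (Var q) G); auto; discriminate. }
      assert (Hmin : forall w, (forall Y, In Y G -> eval w Y = true) ->
                forall q, vS q = true -> w q = true).
      { intros w Hw q Hq. apply (Hw (Var q)). auto. }
      assert (HSG : forall Y, In Y G -> eval vS Y = true).
      { intros Y HY. destruct Y.
        - simpl; unfold vS; destruct (in_dec form_eq_dec (Var n0) G); auto.
        - exfalso; apply NR; exists Bot; split; auto; right; right; left; auto.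
        - exfalso; apply NR; exists (And Y1 Y2); split; auto; left; eauto.
        - exfalso; apply NR; exists (Or Y1 Y2); split; auto; right; left; eauto.
        - simpl. destruct (eval vS Y1) eqn:E1; auto. exfalso.
          apply NR. exists (Imp Y1 Y2); split; auto. right; right; right.
          exists Y1, Y2; split; auto. intros w Hw.
          assert (Hle : forall q, vS q = true -> w q = true).
          { intros q Hq. apply (Hw (Var q)). apply in_in_remove; [discriminate|auto]. }
          apply (proj1 (eval_mono Y1 vS w Hle)); auto.
          intros q Hq. apply (HG q). apply (VnsL_In q _ _ HY). simpl; rewrite in_app_iff; auto. }
      assert (EA : eval vS A = true) by (apply Hv; exact HSG).
      destruct A as [p| |B C|B C|B C].
      + apply NJ_ass. apply HvS. exact EA.
      + discriminate.
      + exfalso; apply NA; eauto.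
      + simpl in EA. simpl in HA, Hs.
        assert (HB : forall q, ~ In q (vp false B)) by (intros q Hq; apply (HA q); rewrite in_app_iff; auto).
        assert (HC : forall q, ~ In q (vp false C)) by (intros q Hq; apply (HA q); rewrite in_app_iff; auto).
        apply orb_true_iff in EA as [E|E].
        * apply NJ_orI1. apply IH; auto; try lia.
          intros w Hw. apply (proj1 (eval_mono B vS w (Hmin w Hw))); auto.
        * apply NJ_orI2. apply IH; auto; try lia.
          intros w Hw. apply (proj1 (eval_mono C vS w (Hmin w Hw))); auto.
      + exfalso; apply NI; eauto. }
  destruct A as [p| |B C|B C|B C]; try (apply Hgen; intros [B' [C' HH]]; discriminate).
  - simpl in HA, Hs.
    apply NJ_andI; apply IH; auto; try lia;
      try (intros q Hq; apply (HA q); rewrite in_app_iff; auto);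
      intros v Hv'; specialize (Hv v Hv'); simpl in Hv; apply andb_true_iff in Hv; tauto.
  - simpl in HA, Hs. apply NJ_impI.
    assert (D : NJ (fun X => In X (B :: G)) C).
    { apply IH; simpl; try lia.
      - intros v Hv'. specialize (Hv v (fun Y HY => Hv' Y (or_intror HY))). simpl in Hv.
        rewrite (Hv' B (or_introl eq_refl)) in Hv. exact Hv.
      - intros q Hq. rewrite in_app_iff in Hq. destruct Hq as [Hq|Hq].
        + apply (HA q). rewrite in_app_iff; left. apply Vns_Vpos; auto.
        + apply (HG q); auto.
      - intros q Hq; apply (HA q); rewrite in_app_iff; auto. }
    eapply NJ_weak; [exact D|]. intros X [<-|HX]; auto.
Qed.

Definition Vset G A q := (In q (VnegL G) \/ In q (Vpos A)) /\ (In q (VnsL G) \/ In q (Vneg A)).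

Lemma L_vp : forall p c, (forall b, vp b c = []) -> forall b G q,
  In q (flat_map (vp b) (map (subst p c) G)) -> In q (flat_map (vp b) G) /\ q <> p.
Proof.
  intros p c Hc b G q H. apply in_flat_map in H as [Y [HY Hq]].
  apply in_map_iff in HY as [X [<- HX]]. apply vp_subst in Hq as [Hq Hn]; auto.
  split; auto. apply in_flat_map; eauto.
Qed.

Lemma L_ns : forall p c, (forall b, vp b c = []) -> Vns c = [] -> forall G q,
  In q (VnsL (map (subst p c) G)) -> In q (VnsL G) /\ q <> p.
Proof.
  intros p c Hc Hc' G q H. apply in_flat_map in H as [Y [HY Hq]].
  apply in_map_iff in HY as [X [<- HX]]. apply Vns_subst in Hq as [Hq Hn]; auto.
  split; auto. apply in_flat_map; eauto.
Qed.

Lemma Vset_subst : forall p c, (forall b, vp b c = []) -> Vns c = [] -> forall G A q,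
  Vset (map (subst p c) G) (subst p c A) q -> Vset G A q /\ q <> p.
Proof.
  intros p c Hc Hc' G A q [H1 H2].
  unfold VnegL, Vneg, Vpos in *.
  destruct H1 as [H1|H1]; [apply (L_vp p c Hc) in H1|apply (vp_subst p c Hc) in H1];
  (destruct H2 as [H2|H2]; [apply (L_ns p c Hc Hc') in H2|apply (vp_subst p c Hc) in H2]);
  unfold Vset, VnegL, Vneg, Vpos; tauto.
Qed.

Lemma Vns_Top : Vns Top = []. Proof. reflexivity. Qed.
Lemma Vns_Bot : Vns Bot = []. Proof. reflexivity. Qed.

Lemma Phase2 : forall L G A, valid G A -> (forall q, ~ Vset G A q) ->
  (forall q, In q (VnsL G) \/ In q (Vneg A) -> In q L) -> NJ (fun X => In X G) A.
Proof.
  induction L as [|p L IH]; intros G A Hv HV HL.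
  - apply (Core2 (ssz G + size A)); auto.
    + intros q Hq. apply (HL q); auto.
    + intros q Hq. apply (HL q); auto.
  - destruct (classic (In p (VnsL G) \/ In p (Vneg A))) as [Hp|Hp].
    + assert (Hn1 : ~ In p (VnegL G)) by (intro; apply (HV p); split; tauto).
      assert (Hn2 : ~ In p (Vpos A)) by (intro; apply (HV p); split; tauto).
      assert (D : NJ (fun X => In X (map (subst p Top) G)) (subst p Top A)).
      { apply IH.
        - apply valid_subst; auto.
        - intros q Hq. apply Vset_subst in Hq; [|exact Top_vp|reflexivity]. apply (HV q); tauto.
        - intros q Hq. unfold Vneg in Hq.
          destruct Hq as [Hq|Hq]; [apply (L_ns p Top Top_vp Vns_Top) in Hq|
            apply (vp_subst p Top Top_vp) in Hq];
          destruct Hq as [Hq Hq']; (destruct (HL q) as [->|]; [unfold Vneg; tauto|congruence|auto]). }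
      apply (proj2 (NJ_mono p A _)); [exact Hn2|].
      eapply NJ_trans; [exact D|]. intros Y HY. apply in_map_iff in HY as [X [<- HX]].
      apply (proj1 (NJ_mono p X _)); [|apply NJ_ass; exact HX].
      intro; apply Hn1. apply in_flat_map; eauto.
    + apply IH; auto. intros q Hq. destruct (HL q Hq) as [->|]; tauto.
Qed.

Lemma Phase1 : forall L W G A, valid G A -> (forall q, Vset G A q -> In q L /\ W q) ->
  NJ (fun X => PiV W X \/ In X G) A.
Proof.
  induction L as [|p L IH]; intros W G A Hv HL.
  - assert (D : NJ (fun X => In X G) A).
    { apply (Phase2 (VnsL G ++ Vneg A)); auto.
      + intros q Hq. apply HL in Hq as [[] _].
      + intros q Hq. apply in_app_iff; auto. }
    eapply NJ_weak; [exact D|]. intros X HX; now right.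
  - destruct (classic (W p)) as [Wp|Wp].
    + eapply NJ_orE; [apply NJ_ass; left; exists p; split; [exact Wp|reflexivity]| |].
      * assert (D : NJ (fun X => PiV W X \/ In X (map (subst p Top) G)) (subst p Top A)).
        { apply IH; [apply valid_subst; auto|].
          intros q Hq. apply Vset_subst in Hq as [Hq Hn]; [|exact Top_vp|reflexivity].
          destruct (HL q Hq) as [[->|HqL] Wq]; [congruence|auto]. }
        apply (proj2 (NJ_subst_Top p A _ (or_introl eq_refl))).
        eapply NJ_trans; [exact D|]. intros Y [HY|HY].
        -- apply NJ_ass. right; left; auto.
        -- apply in_map_iff in HY as [X [<- HX]].
           apply (proj1 (NJ_subst_Top p X _ (or_introl eq_refl))).
           apply NJ_ass; right; right; auto.
      * assert (D : NJ (fun X => PiV W X \/ In X (map (subst p Bot) G)) (subst p Bot A)).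
        { apply IH; [apply valid_subst; auto|].
          intros q Hq. apply Vset_subst in Hq as [Hq Hn]; [|exact Bot_vp|reflexivity].
          destruct (HL q Hq) as [[->|HqL] Wq]; [congruence|auto]. }
        apply (proj2 (NJ_subst_Bot p A _ (or_introl eq_refl))).
        eapply NJ_trans; [exact D|]. intros Y [HY|HY].
        -- apply NJ_ass. right; left; auto.
        -- apply in_map_iff in HY as [X [<- HX]].
           apply (proj1 (NJ_subst_Bot p X _ (or_introl eq_refl))).
           apply NJ_ass; right; right; auto.
    + apply IH; auto. intros q Hq. destruct (HL q Hq) as [[->|HqL] Wq]; tauto.
Qed.

Theorem mainTheorem1 (G : list form) (A : form) :
  cderiv G A ->
  ideriv (fun p => (In p (VnegL G) \/ In p (Vpos A)) /\
                   (In p (VnsL G) \/ In p (Vneg A))) G A.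
Proof.
  intros H. apply (Phase1 (VnegL G ++ Vpos A)).
  - apply cderiv_valid; auto.
  - intros q Hq. split; auto. destruct Hq as [Hq _]. apply in_app_iff; auto.
Qed.
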